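(* Let $K\ge2$ and $0<t_0<t_K$ be fixed and put $t_{K-1}:=t_0(t_K/t_0)^{(K-1)/K}$. Among all choices of points $t_0<t_1<\dots<t_{K-2}<t_{K-1}$ (with $t_{K-1}$ and $t_K$ as fixed above), the choice $t_k=t_0(t_K/t_0)^{k/K}$, $1\le k\le K-2$, minimizes $$C_{\mathrm{disc}}=\sum_{k=1}^{K-1}\max\{0,(t_{k+1}-t_k)-(t_k-t_{k-1})\}\frac{1}{t_k}+\frac{t_1-t_0}{t_0}.$$
   Context: The discretization $t_k=t_0(t_K/t_0)^{k/K}$, $0\le k\le K$, is called the log-SNR adapted discretization (it satisfies $t_{k+1}=e^{\Delta}t_k$ with $\Delta=\frac1K\log\frac{t_K}{t_0}$). *)

(* Defs.v *)
From Stdlib Require Import Reals Lra Lia.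
Open Scope R_scope.

Definition geom (t0 tK : R) (K k : nat) : R :=
  t0 * Rpower (tK / t0) (INR k / INR K).

Definition Cdisc (K : nat) (t : nat -> R) : R :=
  sum_f 1 (K - 1)
    (fun k => Rmax 0 ((t (S k) - t k) - (t k - t (pred k))) * / t k)
  + (t 1%nat - t 0%nat) / t 0%nat.

(* Main.v *)
Require Import Defs.
From Stdlib Require Import Reals Lra Lia Psatz.
Open Scope R_scope.
Lemma term_ineq (a b L : R) : 0 < a -> 0 < b ->
  exp L + / exp L + (exp L - / exp L) * (ln b - ln a - L) <= b / a + a / b.
Proof.
  intros Ha Hb.
  set (x := ln b - ln a - L).
  assert (Eb : b = exp L * exp x * a).
  { rewrite <- (exp_ln a) at 1 by lra. rewrite <- !exp_plus.
    unfold x. replace (L + (ln b - ln a - L) + ln a) with (ln b) by ring.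
    now rewrite exp_ln. }
  assert (HE := exp_pos L). assert (He := exp_pos x).
  assert (H1 := exp_ineq1_le x). assert (H2 := exp_ineq1_le (- x)).
  rewrite exp_Ropp in H2.
  assert (Q1 : b / a = exp L * exp x) by (rewrite Eb; field; lra).
  assert (Q2 : a / b = / exp L * / exp x) by (rewrite Eb; field; lra).
  rewrite Q1, Q2.
  assert (exp L * (1 + x) <= exp L * exp x) by (apply Rmult_le_compat_l; lra).
  assert (/ exp L * (1 + - x) <= / exp L * / exp x).
  { apply Rmult_le_compat_l; [left; apply Rinv_0_lt_compat; lra | lra]. }
  nra.
Qed.

Lemma telesc (f : nat -> R) (A c L : R) (n : nat) :
  sum_f_R0 (fun i => A + c * (f (S i) - f i - L)) n
  = INR (S n) * A + c * (f (S n) - f 0%nat - INR (S n) * L).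
Proof.
  induction n.
  - simpl. ring.
  - rewrite tech5, IHn. rewrite (S_INR (S n)). ring.
Qed.

Lemma shiftF (s : nat -> R) (n : nat) :
  sum_f_R0 (fun i => s (S (S i)) / s (S i) + s i / s (S i) - 2) n + s 1%nat / s 0%nat
  = sum_f_R0 (fun i => s (S i) / s i + s i / s (S i)) n
    + s (S (S n)) / s (S n) - 2 * INR (S n).
Proof.
  induction n.
  - simpl. ring.
  - rewrite !tech5. rewrite (S_INR (S n)).
    replace (sum_f_R0 (fun i => s (S (S i)) / s (S i) + s i / s (S i) - 2) n +
      (s (S (S (S n))) / s (S (S n)) + s (S n) / s (S (S n)) - 2) + s 1%nat / s 0%nat)
    with ((sum_f_R0 (fun i => s (S (S i)) / s (S i) + s i / s (S i) - 2) n + s 1%nat / s 0%nat) +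
      (s (S (S (S n))) / s (S (S n)) + s (S n) / s (S (S n)) - 2)) by ring.
    rewrite IHn. ring.
Qed.

Definition F (s : nat -> R) (n : nat) : R :=
  sum_f_R0 (fun i => s (S (S i)) / s (S i) + s i / s (S i) - 2) n + s 1%nat / s 0%nat - 1.



Lemma F_eq (s : nat -> R) (n : nat) : F s n =
  sum_f_R0 (fun i => s (S i) / s i + s i / s (S i)) n
    + s (S (S n)) / s (S n) - 2 * INR (S n) - 1.
Proof. unfold F. rewrite shiftF. reflexivity. Qed.

Lemma cdisc_ge (s : nat -> R) (n : nat) :
  (forall k, (k <= S (S n))%nat -> 0 < s k) -> F s n <= Cdisc (S (S n)) s.
Proof.
  intros Hp. unfold Cdisc, F, sum_f.
  replace (S (S n) - 1 - 1)%nat with n by lia.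
  match goal with |- ?A + ?b - 1 <= _ => replace (A + b - 1) with (A + (b-1)) by ring end.
  apply Rplus_le_compat; [| right; field; apply Rgt_not_eq, Hp; lia].
  apply sum_Rle. intros i Hi. rewrite Nat.add_1_r. simpl pred.
  assert (P := Hp (S i) ltac:(lia)).
  eapply Rle_trans; [| apply Rmult_le_compat_r; [left; apply Rinv_0_lt_compat; exact P | apply Rmax_r]].
  right. field. lra.
Qed.

Lemma cdisc_eq (s : nat -> R) (n : nat) :
  (forall k, (k <= S (S n))%nat -> 0 < s k) ->
  (forall i, (i <= n)%nat -> 0 <= (s (S (S i)) - s (S i)) - (s (S i) - s i)) ->
  Cdisc (S (S n)) s = F s n.
Proof.
  intros Hp Hc. unfold Cdisc, F, sum_f.
  replace (S (S n) - 1 - 1)%nat with n by lia.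
  match goal with |- _ = ?A + ?b - 1 => replace (A + b - 1) with (A + (b-1)) by ring end.
  f_equal; [| field; apply Rgt_not_eq, Hp; lia].
  apply sum_eq. intros i Hi. rewrite Nat.add_1_r. simpl pred.
  assert (P := Hp (S i) ltac:(lia)).
  rewrite Rmax_right by (apply Hc; lia). field. lra.
Qed.

Theorem lemma5 (K : nat) (t0 tK : R) (t : nat -> R) :
  (2 <= K)%nat -> 0 < t0 -> t0 < tK ->
  t 0%nat = t0 ->
  t (K - 1)%nat = geom t0 tK K (K - 1) ->
  t K = tK ->
  (forall k : nat, (k < K - 1)%nat -> t k < t (S k)) ->
  Cdisc K (geom t0 tK K) <= Cdisc K t.
Proof.
  intros HK H0 H0K Ht0 HtK1 HtK Hmono.
  destruct K as [|[|n]]; try lia.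
  replace (S (S n) - 1)%nat with (S n) in * by lia.
  set (q := tK / t0).
  assert (Hq : 1 < q) by (unfold q; apply (Rmult_lt_reg_r t0); [lra|]; field_simplify; lra).
  assert (HKp : 0 < INR (S (S n))) by (apply lt_0_INR; lia).
  set (L := ln q / INR (S (S n))).
  assert (HL : 0 < L) by (unfold L; apply Rdiv_lt_0_compat; [rewrite <- ln_1; apply ln_increasing; lra | lra]).
  set (r := exp L).
  assert (Hr : 1 < r) by (unfold r; rewrite <- exp_0; apply exp_increasing; lra).
  assert (Hg : forall k, geom t0 tK (S (S n)) k = t0 * exp (INR k * L)).
  { intro k. unfold geom, Rpower. fold q. f_equal. f_equal. unfold L, Rdiv. ring. }
  assert (Hgp : forall k, 0 < geom t0 tK (S (S n)) k).
  { intro k. rewrite Hg. apply Rmult_lt_0_compat; [lra | apply exp_pos]. }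
  assert (HgS : forall k, geom t0 tK (S (S n)) (S k) = geom t0 tK (S (S n)) k * r).
  { intro k. rewrite !Hg, S_INR. unfold r. rewrite Rmult_assoc, <- exp_plus. f_equal. f_equal. ring. }
  assert (HgK : geom t0 tK (S (S n)) (S (S n)) = tK).
  { rewrite Hg. unfold L. replace (INR (S (S n)) * (ln q / INR (S (S n)))) with (ln q) by (field; lra).
    rewrite exp_ln by lra. unfold q. field. lra. }
  assert (Hlg : forall k, ln (geom t0 tK (S (S n)) k) = ln t0 + INR k * L).
  { intro k. rewrite Hg, ln_mult, ln_exp; [ring | lra | apply exp_pos]. }
  assert (Htp : forall k, (k <= S (S n))%nat -> 0 < t k).
  { assert (G : forall k, (k <= S n)%nat -> t0 <= t k).
    { induction k; intros Hk. rewrite Ht0; lra.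
      assert (Hm := Hmono k ltac:(lia)). assert (IH := IHk ltac:(lia)). lra. }
    intros k Hk. destruct (Nat.eq_dec k (S (S n))) as [->|Hne]. lra.
    assert (G' := G k ltac:(lia)). lra. }
  set (g := geom t0 tK (S (S n))).
  assert (Hgr : forall i, g (S i) / g i = r /\ g i / g (S i) = / r).
  { intro i. unfold g. rewrite HgS. assert (P := Hgp i). split; field; lra. }
  rewrite (cdisc_eq g n).
  2:{ intros; apply Hgp. }
  2:{ intros i _. unfold g. rewrite !HgS. assert (P := Hgp i).
       assert (0 <= geom t0 tK (S (S n)) i * ((r-1)*(r-1))) by (apply Rmult_le_pos; nra).
       match goal with |- 0 <= ?e => replace e with (geom t0 tK (S (S n)) i * ((r-1)*(r-1))) by ring end. lra. }
  eapply Rle_trans; [| apply cdisc_ge; exact Htp].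
  rewrite !F_eq.
  assert (E1 : g (S (S n)) / g (S n) = t (S (S n)) / t (S n)).
  { rewrite HtK, HtK1. unfold g. rewrite HgK. reflexivity. }
  rewrite E1.
  assert (S1 : sum_f_R0 (fun i => g (S i) / g i + g i / g (S i)) n = (r + / r) * INR (S n)).
  { rewrite <- sum_cte. apply sum_eq. intros i _. destruct (Hgr i) as [-> ->]. reflexivity. }
  rewrite S1.
  assert (S2 : (r + / r) * INR (S n) <= sum_f_R0 (fun i => t (S i) / t i + t i / t (S i)) n).
  { eapply Rle_trans; [| apply sum_Rle; intros i Hi; apply (term_ineq (t i) (t (S i)) L); apply Htp; lia].
    rewrite (telesc (fun k => ln (t k))). right. fold r.
    rewrite HtK1, Ht0, Hlg. ring. }
  lra.
Qed.
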